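(* Let $z=(L,\xi)\in Z$ with $L>0$ and assume there are a direction $u\in\mathbb R^2$ and $c>0$ such that $\xi_\tau^Tu\ge c$ almost everywhere on $]0,1[$. Then the derivative $h'(z):\delta Z\to L^\infty(]0,1[)$, $h'(z)[\delta L,\delta\xi]=2\xi_\tau^T\delta\xi_\tau-2L\,\delta L$, is surjective, i.e. $z$ is a regular point.
   Context: $X=\{\xi\in W^{1,\infty}(]0,1[,\mathbb R^2):\xi(0)=x_O,\xi(1)=x_D\}$ for fixed points $x_O,x_D\in\mathbb R^2$; $\delta X=W^{1,\infty}_0(]0,1[,\mathbb R^2)$; $\xi_\tau$ denotes the derivative of $\xi$. $Z=\mathbb R\times X$, $\delta Z=\mathbb R\times\delta X$, and $h:Z\to L^\infty(]0,1[)$, $h(L,\xi)=\xi_\tau^T\xi_\tau-L^2$. *)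

(* Defs.v *)
From HB Require Import structures.
From mathcomp Require Import all_boot all_order all_algebra.
From mathcomp Require Import all_classical all_reals all_analysis.
Set Implicit Arguments. Unset Strict Implicit. Unset Printing Implicit Defensive.
Import Order.TTheory GRing.Theory Num.Theory.
Local Open Scope classical_set_scope.
Local Open Scope ring_scope.

Section Defs.
Variable R : realType.
Local Notation mu := (@lebesgue_measure R).

Definition Linf01 (g : R -> R) : Prop :=
  measurable_fun (`]0, 1[%classic : set R) g /\
  exists M : R, {ae mu, forall s, `]0, 1[%classic s -> `|g s| <= M}.

(* x : [0,1] -> R (continuous representative) belongs to W^{1,oo}(]0,1[)
   with (weak) derivative g: g is in L^oo(]0,1[), integrable, and
   x t = x 0 + int_0^t g for all t in [0,1]. *)
Definition W1inf_deriv (x g : R -> R) : Prop :=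
  Linf01 g /\ mu.-integrable (`]0, 1[%classic : set R) (EFin \o g) /\
  forall t, `[0, 1]%classic t -> x t = x 0 + Rintegral mu (`]0, t[%classic : set R) g.

Definition W1inf2 (x xt : 'I_2 -> R -> R) : Prop :=
  forall i, W1inf_deriv (x i) (xt i).

Definition in_X (xO xD : 'I_2 -> R) (x xt : 'I_2 -> R -> R) : Prop :=
  W1inf2 x xt /\ (forall i, x i 0 = xO i) /\ (forall i, x i 1 = xD i).

Definition in_dX (x xt : 'I_2 -> R -> R) : Prop :=
  W1inf2 x xt /\ (forall i, x i 0 = 0) /\ (forall i, x i 1 = 0).

Definition dh (L : R) (xt : 'I_2 -> R -> R) (dL : R) (dxt : 'I_2 -> R -> R)
  (s : R) : R :=
  2 * (\sum_(i < 2) xt i s * dxt i s) - 2 * L * dL.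

End Defs.

(* Main.v *)
Require Import Defs.
From HB Require Import structures.
From mathcomp Require Import all_boot all_order all_algebra.
From mathcomp Require Import all_classical all_reals all_analysis.
From mathcomp Require Import ring lra.
Import Order.TTheory GRing.Theory Num.Theory.
Local Open Scope classical_set_scope.
Local Open Scope ring_scope.

Section H.
Variable R : realType.
Local Notation mu := (@lebesgue_measure R).

Lemma mu01 : mu (`]0, 1[%classic : set R) = 1%E.
Proof. by rewrite lebesgue_measure_itv/= lte01 oppr0 adde0. Qed.

Lemma integ01 (h : R -> R) (B : R) :
  measurable_fun (`]0, 1[%classic : set R) h ->
  (forall s, `]0, 1[%classic s -> `|h s| <= B) ->
  mu.-integrable (`]0, 1[%classic : set R) (EFin \o h).
Proof.
move=> mh hb; apply: measurable_bounded_integrable => //.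
  by apply: (le_lt_trans (y := 1%E)); [rewrite -(mu01) | exact: ltry].
exists B; split; first exact: num_real.
by move=> M BM x Dx; exact: le_trans (hb x Dx) (ltW BM).
Qed.

Lemma itv00 : (`]0, 0[%classic : set R) = set0.
Proof. exact: set_itvoo0. Qed.


Lemma minmax_id (x lo hi : R) : lo <= x -> x <= hi ->
  Num.min (Num.max x lo) hi = x.
Proof.
move=> h1 h2; have -> : Num.max x lo = x by apply/max_idPl.
by apply/min_idPl.
Qed.

Lemma minmax_ge (x lo hi : R) : lo <= hi -> lo <= Num.min (Num.max x lo) hi.
Proof. by move=> h; rewrite le_min h le_max lexx orbT. Qed.

Lemma minmax_le (x lo hi : R) : Num.min (Num.max x lo) hi <= hi.
Proof. by rewrite ge_min lexx orbT. Qed.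

Lemma minmax_mono (lo hi : R) : {homo (fun x => Num.min (Num.max x lo) hi) : x y / x <= y}.
Proof.
by move=> x y xy /=; apply: le_min2 => //; apply: le_max2.
Qed.

End H.

Theorem theorem2 (R : realType) (xO xD : 'I_2 -> R) (L : R)
  (xi xit : 'I_2 -> R -> R) (u : 'I_2 -> R) (c : R) :
  in_X xO xD xi xit -> 0 < L -> 0 < c ->
  {ae @lebesgue_measure R, forall s, `]0, 1[%classic s ->
      c <= \sum_(i < 2) xit i s * u i} ->
  forall f : R -> R, Linf01 f ->
  exists (dL : R) (dxi dxit : 'I_2 -> R -> R),
    in_dX dxi dxit /\
    {ae @lebesgue_measure R, forall s, `]0, 1[%classic s -> dh L xit dL dxit s = f s}.
Proof.
move=> [HW [HO HD]] L0 c0 Hc f [mf [Mf HMf]].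
set D := (`]0, 1[%classic : set R).
have mD : measurable D by exact: measurable_itv.
have [mx0 [M0 HM0]] := (HW ord0).1.
have [mx1 [M1 HM1]] := (HW (lift ord0 (ord0 : 'I_1))).1.
pose w s := \sum_(i < 2) xit i s * u i.
pose K := c + `|M0| * `|u ord0| + `|M1| * `|u (lift ord0 (ord0 : 'I_1))|.
have cK : c <= K by rewrite /K -addrA lerDl addr_ge0// mulr_ge0.
have K0 : 0 < K by exact: lt_le_trans cK.
pose Mf1 := `|Mf|.
pose cW := fun x : R => (Num.min (Num.max x c) K : R).
pose g := fun x : R => ((cW x)^-1 : R).
pose cF := fun x : R => (Num.min (Num.max x (- Mf1)) Mf1 : R).
have cWge x : c <= cW x by exact: minmax_ge.
have cWpos x : 0 < cW x by exact: lt_le_trans (cWge x).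
have gpos x : 0 < g x by rewrite invr_gt0.
have gle x : g x <= c^-1 by rewrite lef_pV2 ?posrE.
have gge x : K^-1 <= g x by rewrite lef_pV2 ?posrE// minmax_le.
have gni : {homo g : x y /~ x <= y}.
  by move=> x y xy; rewrite lef_pV2 ?posrE// minmax_mono.
have cFb x : `|cF x| <= Mf1.
  rewrite ler_norml minmax_le andbT; apply: minmax_ge.
  by have := normr_ge0 Mf; rewrite /Mf1; lra.
have mw : measurable_fun D w.
  apply: measurable_sum => i; apply: measurable_realfun.measurable_funM => //.
  exact: (HW i).1.1.
have mq : measurable_fun D (g \o w).
  apply: measurableT_comp => //; apply: measurable_realfun.nonincreasing_measurable => // x y xy; exact: gni.
have mcF : measurable_fun D (cF \o f).
  apply: measurableT_comp => //; apply: measurable_realfun.nondecreasing_measurable => //.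
  exact: minmax_mono.
pose p s := cF (f s) / 2 * g (w s).
pose q s := g (w s).
have mp : measurable_fun D p.
  by apply: measurable_realfun.measurable_funM => //; apply: measurable_realfun.measurable_funM.
have ip : (@lebesgue_measure R).-integrable D (EFin \o p).
  apply: (@integ01 _ _ (Mf1 * c^-1)) => // s _.
  rewrite /p normrM; apply: ler_pM => //.
    have := cFb (f s); have := normr_ge0 (cF (f s)).
    rewrite normrM (@ger0_norm _ 2^-1) ?invr_ge0//; lra.
  by rewrite ger0_norm// ltW.
have iq : (@lebesgue_measure R).-integrable D (EFin \o q).
  apply: (@integ01 _ _ c^-1) => // s _.
  by rewrite /q ger0_norm// ltW.
have icst : (@lebesgue_measure R).-integrable D (EFin \o (fun _ => K^-1)).
  by apply: (@integ01 _ _ K^-1) => // s _; rewrite ger0_norm// invr_ge0 ltW.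
pose I1 := \int[@lebesgue_measure R]_(s in D) p s.
pose I2 := \int[@lebesgue_measure R]_(s in D) q s.
have I2pos : 0 < I2.
  apply: (@lt_le_trans _ _ (\int[@lebesgue_measure R]_(s in D) K^-1)).
    rewrite Rintegral_cst//.
    have -> : fine (@lebesgue_measure R D) = 1.
      by rewrite /D lebesgue_measure_itv/= lte01 oppr0 adde0.
    by rewrite mulr1 invr_gt0.
  by apply: le_Rintegral => // s _; exact: gge.
pose dL := - I1 / (L * I2).
pose a s := p s + L * dL * q s.
have ma : measurable_fun D a.
  apply: measurable_realfun.measurable_funD => //.
  by apply: measurable_realfun.measurable_funM.
pose Ba := Mf1 * c^-1 + `|L * dL| * c^-1.
have ab s : `|a s| <= Ba.
  rewrite /a (le_trans (ler_normD _ _))// lerD//.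
    rewrite /p normrM; apply: ler_pM => //.
      have := cFb (f s); have := normr_ge0 (cF (f s)).
      rewrite normrM (@ger0_norm _ 2^-1) ?invr_ge0//; lra.
    by rewrite ger0_norm// ltW.
  rewrite normrM; apply: ler_wpM2l => //.
  by rewrite /q ger0_norm// ltW.
have ia : (@lebesgue_measure R).-integrable D (EFin \o a).
  exact: (@integ01 _ _ Ba).
have Ia : \int[@lebesgue_measure R]_(s in D) a s = 0.
  rewrite /a RintegralD//; last first.
    apply: (@integ01 _ _ (`|L * dL| * c^-1)).
      exact: measurable_realfun.measurable_funM.
    by move=> s _; rewrite normrM ler_wpM2l// /q ger0_norm// ltW.
  rewrite RintegralZl// -/I1 -/I2 /dL.
  have : I2 != 0 by rewrite gt_eqF.
  have : L != 0 by rewrite gt_eqF.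
  by move=> ? ?; field; apply/andP.
pose dxit := fun (i : 'I_2) (s : R) => a s * u i.
pose dxi := fun (i : 'I_2) (t : R) =>
  \int[@lebesgue_measure R]_(s in (`]0, t[%classic : set R)) dxit i s.
have dxi0 i : dxi i 0 = 0 by rewrite /dxi set_itvoo0 Rintegral_set0.
exists dL; exists dxi; exists dxit; split.
  split; last split.
  - move=> i; have mdi : measurable_fun D (dxit i).
      by apply: measurable_realfun.measurable_funM.
    have bdi s : `|dxit i s| <= Ba * `|u i|.
      by rewrite /dxit normrM ler_wpM2r.
    split; first split => //.
      by exists (Ba * `|u i|); apply: aeW => s _.
    split; first exact: (@integ01 _ _ (Ba * `|u i|)).
    by move=> t _; rewrite dxi0 add0r.
  - exact: dxi0.
  - move=> i; rewrite /dxi /dxit RintegralZr//.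
    by rewrite -/D Ia mul0r.
have FF := ae_filter_ringOfSetsType (@lebesgue_measure R).
apply: (filterS _ (filterI Hc (filterI HMf (filterI HM0 HM1)))).
move=> s [h1 [h2 [h3 h4]]] Ds.
have {h1}h1 := h1 Ds; have {h2}h2 := h2 Ds.
have {h3}h3 := h3 Ds; have {h4}h4 := h4 Ds.
have wK : w s <= K.
  rewrite /w big_ord_recl big_ord1 /K.
  have e0 : xit ord0 s * u ord0 <= `|M0| * `|u ord0|.
    rewrite (le_trans (ler_norm _))// normrM ler_wpM2r//.
    exact: le_trans h3 (ler_norm _).
  have e1 : xit (lift ord0 (ord0 : 'I_1)) s * u (lift ord0 (ord0 : 'I_1)) <= `|M1| * `|u (lift ord0 (ord0 : 'I_1))|.
    rewrite (le_trans (ler_norm _))// normrM ler_wpM2r//.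
    exact: le_trans h4 (ler_norm _).
  lra.
have cWw : cW (w s) = w s by exact: minmax_id.
have cFf : cF (f s) = f s.
  apply: minmax_id.
    have := h2; rewrite ler_norml => /andP[+ _].
    have := ler_norm Mf; rewrite /Mf1; lra.
  have := h2; rewrite ler_norml => /andP[_ +].
  have := ler_norm Mf; rewrite /Mf1; lra.
have w0 : w s != 0 by rewrite gt_eqF// (lt_le_trans c0).
rewrite /dh /dxit.
under eq_bigr do rewrite mulrCA.
rewrite -mulr_sumr -/(w s) /a /p /q /g cWw cFf.
by field.
Qed.
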